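(* Let $w$ be a metric on $V$, $T$ a minimum spanning tree of $G_w$, and $T'$ a subtree of $T$. Let $e=(u,v)$ be a pair with $u\in V(T')$ and $v\notin V(T')$. Then $\mathsf{adv}(\{e\},T')\le \mathsf{adv}^*(T')$.
   Context: $w$ is a metric on a finite set $V$, $G_w$ the complete graph on $V$ with edge weights $w$, and $w(E')=\sum_{e\in E'}w(e)$ for a set of pairs $E'$. For a pair $e=(u,v)$, $P^T_e$ is the $u$–$v$ path in $T$; an edge $f\in E(T)$ is covered by $e$ iff $f\in E(P^T_e)$; $\mathsf{cov}(E')$ is the set of edges of $T$ covered by some pair of $E'$, and for a subtree $T'$, $\mathsf{cov}(E',T')=\mathsf{cov}(E')\cap E(T')$ and $\mathsf{adv}(E',T')=w(\mathsf{cov}(E',T'))-w(E')$. A vertex $x$ of $T'$ is a special vertex of $T'$ iff $\deg_{T'}(x)\neq 2$. The optimal special cover advantage $\mathsf{adv}^*(T')$ is the maximum of $\mathsf{adv}(E',T')$ over all sets $E'$ of pairs each having at least one endpoint that is a special vertex of $T'$ (the empty set is allowed, so $\mathsf{adv}^*(T')\ge 0$). *)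

(* Defs.v *)
From HB Require Import structures.
From mathcomp Require Import all_boot all_order all_algebra.
From mathcomp Require Import boolp.
Set Implicit Arguments. Unset Strict Implicit. Unset Printing Implicit Defensive.
Import Order.TTheory GRing.Theory Num.Theory.
Local Open Scope ring_scope.

Section Defs.
Variables (R : realFieldType) (V : finType).

Definition metric (w : V -> V -> R) : Prop :=
  [/\ forall x y, w x y = 0 <-> x = y,
      forall x y, w x y = w y x &
      forall x y z, w x z <= w x y + w y z].

(* Edges / pairs are unordered pairs {x,y}, encoded as 2-element sets. *)
Definition is_pair (f : {set V}) : bool := #|f| == 2%N.

(* weight of an unordered pair {x,y}: equals w x y for a symmetric w
   with w x x = 0 (half the sum over ordered pairs of its elements). *)
Definition wE (w : V -> V -> R) (f : {set V}) : R :=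
  (\sum_(x in f) \sum_(y in f) w x y) / 2%:R.

Definition wset (w : V -> V -> R) (E : {set {set V}}) : R :=
  \sum_(f in E) wE w f.

Definition adj (E : {set {set V}}) : rel V := fun a b => [set a; b] \in E.

Definition has_cycle (E : {set {set V}}) : Prop :=
  exists (x : V) (p : seq V),
    [/\ uniq (x :: p), (2 <= size p)%N, path (adj E) x p & adj E (last x p) x].

Definition spanning_tree (T : {set {set V}}) : Prop :=
  [/\ forall f, f \in T -> is_pair f,
      forall x y, connect (adj T) x y &
      ~ has_cycle T].

Definition mst (w : V -> V -> R) (T : {set {set V}}) : Prop :=
  spanning_tree T /\ forall T2, spanning_tree T2 -> wset w T <= wset w T2.

Definition subtree (T : {set {set V}}) (VT' : {set V}) (ET' : {set {set V}}) : Prop :=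
  [/\ VT' != set0, ET' \subset T,
      forall f, f \in ET' -> f \subset VT' &
      forall x y, x \in VT' -> y \in VT' -> connect (adj ET') x y].

Definition tpath (T : {set {set V}}) (x y : V) (p : seq V) : Prop :=
  [/\ path (adj T) x p, last x p = y & uniq (x :: p)].

Definition pedges (x : V) (p : seq V) : seq {set V} :=
  [seq [set a.1; a.2] | a <- zip (x :: p) p].

Definition covers (T : {set {set V}}) (e f : {set V}) : Prop :=
  exists (x y : V) (p : seq V),
    [/\ e = [set x; y], tpath T x y p & f \in pedges x p].

Definition cov (T : {set {set V}}) (E : {set {set V}}) (ET' : {set {set V}})
  : {set {set V}} :=
  [set f in ET' | `[< exists e, e \in E /\ covers T e f >]].

Definition adv (w : V -> V -> R) (T : {set {set V}}) (E : {set {set V}})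
  (ET' : {set {set V}}) : R :=
  wset w (cov T E ET') - wset w E.

Definition deg (ET' : {set {set V}}) (x : V) : nat := #|[set f in ET' | x \in f]|.

Definition special (VT' : {set V}) (ET' : {set {set V}}) (x : V) : bool :=
  (x \in VT') && (deg ET' x != 2%N).

Definition special_pairs (VT' : {set V}) (ET' : {set {set V}}) (E : {set {set V}})
  : bool :=
  [forall e in E, is_pair e && [exists x in e, special VT' ET' x]].

(* adv^*(T') : maximum of adv(E', T') over admissible E' (E' = set0 is
   admissible, so the default 0 of the max is harmless) *)
Definition advstar (w : V -> V -> R) (T : {set {set V}}) (VT' : {set V})
  (ET' : {set {set V}}) : R :=
  \big[Order.max/0]_(E : {set {set V}} | special_pairs VT' ET' E) adv w T E ET'.

End Defs.

(* Main.v *)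
Require Import Defs.
From HB Require Import structures.
From mathcomp Require Import all_boot all_order all_algebra.
From mathcomp Require Import boolp.
From mathcomp Require Import zify lra.
Import Order.TTheory GRing.Theory Num.Theory.
Local Open Scope ring_scope.

Set Implicit Arguments. Unset Strict Implicit. Unset Printing Implicit Defensive.


Section Gen.
Variable V : finType.
Implicit Types (E : {set {set V}}) (x y : V) (p : seq V).

Lemma adj_sym E x y : adj E x y = adj E y x.
Proof. by rewrite /adj setUC. Qed.

Lemma pedges_cons x y p : pedges x (y :: p) = [set x; y] :: pedges y p.
Proof. by []. Qed.

Lemma pedgesP f x p :
  reflect (exists s1 s2 c d, x :: p = s1 ++ [:: c, d & s2] /\ f = [set c; d])
          (f \in pedges x p).
Proof.
apply: (iffP idP).
  elim: p x => [|y p IH] x //=.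
  rewrite pedges_cons inE => /orP[/eqP->|/IH [s1 [s2 [c [d [E1 E2]]]]]].
    by exists [::], p, x, y.
  by exists (x :: s1), s2, c, d; rewrite E1.
case=> s1 [s2 [c [d [E1 ->]]]].
elim: s1 x p E1 => [|h s1 IH] x p /=.
  by case=> -> ->; rewrite pedges_cons inE eqxx.
case=> -> ; case: p => [|y p]; first by case: s1 {IH}.
move=> E1; rewrite pedges_cons inE; apply/orP; right; exact: IH.
Qed.

Lemma pedges_sub f x p z : f \in pedges x p -> z \in f -> z \in x :: p.
Proof.
case/pedgesP=> s1 [s2 [c [d [-> ->]]]].
by rewrite !inE => /orP[]/eqP->; rewrite mem_cat !inE eqxx ?orbT.
Qed.

Lemma pedges_inE E f x p : path (adj E) x p -> f \in pedges x p -> f \in E.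
Proof.
elim: p x => [|y p IH] x //=.
case/andP=> hxy hp; rewrite pedges_cons inE => /orP[/eqP->|]; first exact: hxy.
exact: IH.
Qed.

Lemma pedges_catl f x p q : f \in pedges x p -> f \in pedges x (p ++ q).
Proof.
case/pedgesP=> s1 [s2 [c [d [E1 ->]]]]; apply/pedgesP.
by exists s1, (s2 ++ q), c, d; rewrite -cat_cons E1 -catA.
Qed.

Lemma pedges_catr f x p q : f \in pedges (last x p) q -> f \in pedges x (p ++ q).
Proof.
case/pedgesP=> s1 [s2 [c [d [E1 ->]]]]; apply/pedgesP.
exists (belast x p ++ s1), s2, c, d; split=> //.
by rewrite -cat_cons lastI cat_rcons E1 catA.
Qed.

Lemma rev_last x p : rev (x :: p) = last x p :: rev (belast x p).
Proof. by rewrite lastI rev_rcons. Qed.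

Lemma pedges_rev f x p :
  f \in pedges x p -> f \in pedges (last x p) (rev (belast x p)).
Proof.
case/pedgesP=> s1 [s2 [c [d [E1 ->]]]]; apply/pedgesP.
exists (rev s2), (rev s1), d, c; split; last by rewrite setUC.
by rewrite -rev_last E1 rev_cat !rev_cons -!cats1 -!catA.
Qed.

Lemma path_rev E x p :
  path (adj E) x p -> path (adj E) (last x p) (rev (belast x p)).
Proof.
by rewrite rev_path; apply: sub_path => a b; rewrite adj_sym.
Qed.

Lemma last_rev_belast x p : last (last x p) (rev (belast x p)) = x.
Proof.
have: last x (rev (x :: p)) = x by rewrite rev_cons last_rcons.
by rewrite rev_last.
Qed.

Lemma uniq_rev_belast x p : uniq (x :: p) -> uniq (last x p :: rev (belast x p)).
Proof. by rewrite -rev_last rev_uniq. Qed.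

End Gen.


Lemma split_first (T : eqType) (P : pred T) s :
  has P s -> exists a z b, s = a ++ z :: b /\ P z /\ ~~ has P a.
Proof.
elim: s => [|h s IH] //= /orP[Ph|/IH [a [z [b [-> [Pz Ha]]]]]].
  by exists [::], h, s.
case Ph: (P h).
  by exists [::], h, (a ++ z :: b).
by exists (h :: a), z, b; rewrite /= Ph.
Qed.

Section Tree.
Variable V : finType.
Implicit Types (E : {set {set V}}) (x y : V) (p : seq V).

Lemma tree_uniq E x p1 p2 : ~ has_cycle E ->
  path (adj E) x p1 -> path (adj E) x p2 -> uniq (x :: p1) -> uniq (x :: p2) ->
  last x p1 = last x p2 -> p1 = p2.
Proof.
move=> Hnc.
elim: p1 x p2 => [|a s1 IH] x [|b s2] //.
- move=> _ _ _ /andP[Hx _] /= Hl; exfalso; move: Hx; rewrite Hl.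
  by rewrite mem_last.
- move=> _ _ /andP[Hx _] _ /= Hl; exfalso; move: Hx; rewrite -Hl.
  by rewrite mem_last.
move=> Hp1 Hp2 Hu1 Hu2 Hl.
have [Eab|Nab] := eqVneq a b.
  subst b; congr (_ :: _); apply: (IH a).
  - by case/andP: Hp1.
  - by case/andP: Hp2.
  - by case/andP: Hu1.
  - by case/andP: Hu2.
  - exact: Hl.
exfalso; apply: Hnc.
have Hh : has (mem (b :: s2)) (a :: s1).
  apply/hasP; exists (last x (a :: s1)); first by rewrite /= mem_last.
  by rewrite Hl /= mem_last.
have [al [z [be [Es1 [Hz Hal]]]]] := @split_first _ _ _ Hh.
have Hh2 : has (pred1 z) (b :: s2) by apply/hasP; exists z; [exact: Hz|exact: eqxx].
have [ga [z' [de [Es2 [/eqP Hz' _]]]]] := @split_first _ _ _ Hh2; subst z'.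
exists x, (al ++ z :: rev ga).
rewrite Es1 in Hu1 Hp1; rewrite Es2 in Hu2 Hp2 Hal.
have Hr : path (adj E) z (rcons (rev ga) x).
  move: Hp2; rewrite cat_path /= => /and3P[H1 H2 _].
  have H3 : path (adj E) x (rcons ga z) by rewrite rcons_path H1 H2.
  by have := path_rev H3; rewrite last_rcons belast_rcons rev_cons.
move: Hu1 Hu2; rewrite /= !mem_cat !inE !negb_or !cat_uniq /=.
move=> /andP[/and3P[Hxal Hxz _] /and4P[Ual /norP[Hzal _] _ _]].
move=> /andP[/and3P[Hxga _ _] /and4P[Uga /norP[Hzga _] _ _]].
have Hga : ~~ has (mem ga) al.
  by apply: contra Hal; apply: sub_has => t /= Ht; rewrite mem_cat Ht.
rewrite cat_path in Hp1; case/andP: Hp1 => Hp1a /andP[Hp1b _].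
move: Hr; rewrite rcons_path => /andP[Hr1 Hr2].
split.
- by rewrite Hxal Hxz mem_rev Hxga Ual (negbTE Hzal) /= has_rev has_sym (negbTE Hga) mem_rev Hzga rev_uniq Uga.
- rewrite size_cat /= size_rev.
  case: al Es1 {Hxal Ual Hzal Hga Hal Hp1a Hp1b} => [|t al] /=; first last. by move=> _; rewrite addSn ltnS addnS.
  case=> Eaz _; case: ga Es2 {Hxga Uga Hzga Hr1 Hr2 Hp2} => [|t ga] //=.
  by case=> Ebz _; move: Nab; rewrite Eaz Ebz eqxx.
- by rewrite cat_path Hp1a /= Hp1b Hr1.
- by rewrite last_cat.
Qed.

Lemma pedges_uniq x p : uniq (x :: p) -> uniq (pedges x p).
Proof.
elim: p x => [|y p IH] x // Hu0.
have /andP[Hx Hu] : (x \notin y :: p) && uniq (y :: p) by exact: Hu0.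
rewrite pedges_cons cons_uniq IH // andbT.
apply/negP => /(pedges_sub (z:=x)); rewrite !inE eqxx /= => /(_ isT).
by move=> H; move: Hx; rewrite inE H.
Qed.

End Tree.


Section Met.
Variables (R : realFieldType) (V : finType) (w : V -> V -> R).
Hypothesis Hm : metric w.

Lemma w0 x : w x x = 0.
Proof. by case: Hm => H _ _; apply/H. Qed.

Lemma wsym x y : w x y = w y x.
Proof. by case: Hm. Qed.

Lemma wtri x y z : w x z <= w x y + w y z.
Proof. by case: Hm. Qed.

Lemma wge0 x y : 0 <= w x y.
Proof.
have := wtri x y x; rewrite w0 (wsym y x) => H.
by rewrite -(pmulr_rge0 _ (ltr0Sn _ 1)) mulr2n mulrDl mul1r.
Qed.

Lemma wE2 x y : wE w [set x; y] = w x y.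
Proof.
rewrite /wE; have [->|Nxy] := eqVneq x y.
  by rewrite setUid !big_set1 w0 mul0r.
have Hn : x \notin [set y] by rewrite inE.
rewrite big_setU1 //= !big_set1 big_setU1 //= big_setU1 //= !big_set1 !w0.
by rewrite (wsym y x) add0r addr0 -mulr2n -[_ *+ 2]mulr_natr mulfK // pnatr_eq0.
Qed.

Lemma wE_ge0 f : 0 <= wE w f.
Proof.
rewrite /wE divr_ge0 // ?ler0n //.
by apply: sumr_ge0 => i _; apply: sumr_ge0 => j _; apply: wge0.
Qed.

Lemma wset1 e : wset w [set e] = wE w e.
Proof. by rewrite /wset big_set1. Qed.

Lemma wset_split (A B : {set {set V}}) : A \subset B ->
  wset w B = wset w A + wset w (B :\: A).
Proof. by move=> /setIidPr HA; rewrite /wset (big_setID A) /= HA. Qed.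

Lemma wset_mono (A B : {set {set V}}) : A \subset B -> wset w A <= wset w B.
Proof.
move=> /wset_split ->; rewrite lerDl /wset.
by apply: sumr_ge0 => i _; apply: wE_ge0.
Qed.

Lemma sum_path x p : w x (last x p) <= \sum_(f <- pedges x p) wE w f.
Proof.
elim: p x => [|y p IH] x /=; first by rewrite w0 big_nil.
rewrite pedges_cons big_cons wE2.
by apply: le_trans (wtri x y _) _; rewrite lerD2l.
Qed.

End Met.


Lemma pair_other (V : finType) (f : {set V}) a :
  is_pair f -> a \in f -> exists y, y != a /\ f = [set a; y].
Proof.
case/cards2P=> c [d [Ncd ->]]; rewrite !inE => /orP[]/eqP->.
  by exists d; rewrite eq_sym.
by exists c; rewrite setUC.
Qed.

Lemma set2_inv (V : finType) (u v x y : V) : u != v ->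
  [set u; v] = [set x; y] -> (x = u /\ y = v) \/ (x = v /\ y = u).
Proof.
move=> Nuv E.
have Hx : x \in [set u; v] by rewrite E set21.
have Hy : y \in [set u; v] by rewrite E set22.
have Hu : u \in [set x; y] by rewrite -E set21.
have Hv : v \in [set x; y] by rewrite -E set22.
move: Hx Hy Hu Hv; rewrite !inE => /orP[]/eqP-> /orP[]/eqP->.
- by rewrite eqxx /= orbb => _ /eqP Evu; move: Nuv; rewrite Evu eqxx.
- by left.
- by right.
- by rewrite orbb => /eqP Euv; move: Nuv; rewrite Euv eqxx.
Qed.

Section Walk.
Variables (V : finType) (T : {set {set V}}) (VT' : {set V}) (ET' : {set {set V}}).
Variables (u v : V) (P : seq V).
Hypothesis Hpair : forall f, f \in T -> is_pair f.
Hypothesis Hnc : ~ has_cycle T.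
Hypothesis HET : ET' \subset T.
Hypothesis HEV : forall f, f \in ET' -> f \subset VT'.
Hypothesis Huv : u != v.
Hypothesis HP : path (adj T) u P.
Hypothesis HlP : last u P = v.

Definition state a Q := [/\ a \in VT', path (adj ET') a Q, last a Q = u
  & uniq (a :: Q ++ P)].

Lemma adjET x y : adj ET' x y -> adj T x y.
Proof. by rewrite /adj => H; apply: (subsetP HET). Qed.

Lemma state_path a Q : state a Q -> path (adj T) a (Q ++ P).
Proof.
case=> _ HQ HlQ _; rewrite cat_path HlQ HP andbT.
exact: (sub_path adjET HQ).
Qed.

Lemma step a Q : state a Q -> ~~ special VT' ET' a ->
  exists y, state y (a :: Q).
Proof.
move=> Hs; have [Ha HQ HlQ HU] := Hs.
rewrite /special Ha /= negbK => /cards2P [f1 [f2 [Nf Hf]]].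
have Hf1 : f1 \in [set f in ET' | a \in f] by rewrite Hf set21.
have Hf2 : f2 \in [set f in ET' | a \in f] by rewrite Hf set22.
move: Hf1 Hf2; rewrite !inE => /andP[E1 a1] /andP[E2 a2].
have [y1 [Ny1 Ef1]] := pair_other (Hpair (subsetP HET _ E1)) a1.
have [y2 [Ny2 Ef2]] := pair_other (Hpair (subsetP HET _ E2)) a2.
have Ny12 : y1 != y2 by apply: contra Nf => /eqP E; rewrite Ef1 Ef2 E.
have HQP : Q ++ P != [::].
  case: Q HlQ {HQ HU Hs} => //= _; apply/eqP=> EP.
  by move: Huv; rewrite -HlP EP /= eqxx.
set h := head a (Q ++ P).
have [y [Ey Nya Nyh]] : exists y, [/\ [set a; y] \in ET', y != a & y != h].
  have [Eh|Nh] := eqVneq y1 h.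
    by exists y2; rewrite -Ef2 E2 Ny2 -Eh eq_sym Ny12.
  by exists y1; rewrite -Ef1 E1 Ny1 Nh.
have HyT : adj T y a by rewrite /adj setUC; apply: (subsetP HET).
have Hnin : y \notin Q ++ P.
  apply/negP => Hin; apply: Hnc.
  have HTp := state_path Hs.
  move: HU HTp Hin Nyh; rewrite /h.
  case: (Q ++ P) HQP => // h' t _ HU HTp; rewrite inE /= => /orP[/eqP->|Hin];
    first by rewrite eqxx.
  move=> _.
  have Hh : has (pred1 y) t by apply/hasP; exists y; [exact: Hin|exact: eqxx].
  have [t1 [y' [t2 [Et [/eqP Hy' _]]]]] := split_first Hh; subst y' t.
  exists a, (h' :: rcons t1 y).
  have E' : a :: h' :: t1 ++ y :: t2 = (a :: h' :: rcons t1 y) ++ t2.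
    by rewrite /= cat_rcons.
  split.
  - by move: HU; rewrite E' cat_uniq => /andP[].
  - by rewrite /= size_rcons.
  - by move: HTp; rewrite -cat_cons -cat_rcons cat_path => /andP[].
  - by rewrite /= last_rcons.
exists y; split.
- by have := HEV Ey; move/subsetP; apply; rewrite set22.
- by rewrite /= HQ andbT /adj setUC.
- by [].
- by rewrite cons_uniq HU andbT inE negb_or Nya Hnin.
Qed.

Lemma extend k a Q : (#|V| - size Q <= k)%N -> state a Q ->
  exists a' Q', special VT' ET' a' /\ state a' Q'.
Proof.
elim: k a Q => [|k IH] a Q Hk Hs.
  case Sa: (special VT' ET' a); first by exists a, Q.
  have [y [_ _ _ Hu]] := step Hs (negbT Sa); exfalso.
  have := max_card (mem (y :: (a :: Q) ++ P)).
  rewrite (card_uniqP Hu) /= size_cat => H; move: (leq_trans H (leqnn #|V|)) Hk.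
  rewrite leqn0 subn_eq0 => H1 H2; have := leq_trans H1 H2; by rewrite ltnNge (leqW (leq_addr _ _)).
case Sa: (special VT' ET' a); first by exists a, Q.
have [y Hy] := step Hs (negbT Sa).
apply: (IH y (a :: Q)) => //=; by rewrite subnS -subn1 leq_subLR add1n.
Qed.

End Walk.

Unset Implicit Arguments. Set Strict Implicit.

Theorem mainTheorem2 (R : realFieldType) (V : finType) (w : V -> V -> R)
  (T : {set {set V}}) (VT' : {set V}) (ET' : {set {set V}}) (u v : V) :
  metric w -> mst w T -> subtree T VT' ET' ->
  u \in VT' -> v \notin VT' ->
  adv w T [set [set u; v]] ET' <= advstar w T VT' ET'.
Proof.
move=> Hm [[Hpair Hcon Hnc] _] [_ HET HEV _] Hu Hv.
have Huv : u != v by apply: contraNneq Hv => <-.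
have [p0 Hp0 Hl0] := connectP (Hcon u v).
move: Hl0; case: (shortenP Hp0) => P HP HUP _ HlP; symmetry in HlP.
have Hs0 : state VT' ET' u P u [::] by split.
have [a [Q [Sa Hs]]] := extend Hpair Hnc HET HEV Huv HP HlP (leq_subr _ _) Hs0.
have HTp := state_path HET HP Hs.
have [Ha HQ HlQ HU] := Hs.
have Nav : a != v by apply: contraNneq Hv => <-.
set E' := [set [set a; v]].
have HE' : special_pairs VT' ET' E'.
  apply/forall_inP => e; rewrite inE => /eqP ->.
  rewrite /is_pair cards2 Nav /=; apply/existsP; exists a; by rewrite set21.
rewrite /advstar; apply: le_trans (le_bigmax_cond 0 (fun E => adv w T E ET') HE').
set C1 := cov T [set [set u; v]] ET'.
set C2 := cov T E' ET'.
set D := [set f | f \in pedges a Q].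
have HK : forall f, f \in C1 -> f \in ET' /\ f \in pedges u P.
  move=> f; rewrite inE => /andP[HfE /asboolP [e [He [x [y [p [Ee [Hp Hl Hup] Hf]]]]]]].
  split=> //; move: He; rewrite inE => /eqP Ee'; rewrite Ee' in Ee.
  case: (set2_inv Huv Ee) => [[Ex Ey]|[Ex Ey]]; move: Hp Hl Hup Hf; rewrite Ex Ey => Hp Hl Hup Hf.
  - have Epp := tree_uniq Hnc Hp HP Hup HUP (etrans Hl (esym HlP)).
    by rewrite -Epp.
  - have Hp' := path_rev Hp; rewrite Hl in Hp'.
    have Hu' := uniq_rev_belast Hup; rewrite Hl in Hu'.
    have Hl' := last_rev_belast v p; rewrite Hl in Hl'.
    have Epp := tree_uniq Hnc Hp' HP Hu' HUP (etrans Hl' (esym HlP)).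
    by have := pedges_rev Hf; rewrite Hl Epp.
have HC2 : forall f, f \in ET' -> f \in pedges a (Q ++ P) -> f \in C2.
  move=> f HfE Hf; rewrite inE HfE /=; apply/asboolP; exists [set a; v].
  split; first by rewrite inE.
  exists a, v, (Q ++ P); split=> //; split=> //.
  by rewrite last_cat HlQ.
have HD : forall f, f \in D -> f \in ET' /\ f \notin C1.
  move=> f; rewrite inE => Hf; have HfE := pedges_inE HQ Hf; split=> //.
  apply/negP => /HK [_ HfP].
  have Honly : forall z, z \in a :: Q -> z \in u :: P -> z = u.
    move=> z Hz1; rewrite inE => /orP[/eqP //|Hz2].
    move: HU; rewrite -cat_cons cat_uniq => /and3P[_ /hasPn H _].
    by move: (H z Hz2); rewrite Hz1.
  have Hpf := Hpair _ (subsetP HET _ HfE).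
  case/pedgesP: Hf => s1 [s2 [c [d [Es Ef]]]].
  have Hc : c \in f by rewrite Ef set21.
  have Hd : d \in f by rewrite Ef set22.
  have Ec : c = u.
    by apply: Honly; [rewrite Es mem_cat !inE eqxx orbT | exact: pedges_sub HfP Hc].
  have Ed : d = u.
    by apply: Honly; [rewrite Es mem_cat !inE eqxx !orbT | exact: pedges_sub HfP Hd].
  by move: Hpf; rewrite /is_pair Ef Ec Ed cards2 eqxx.
have S1 : C1 :|: D \subset C2.
  apply/subsetP => f; rewrite inE => /orP[Hf|Hf].
    have [HfE HfP] := HK f Hf; apply: HC2 => //.
    by apply: pedges_catr; rewrite HlQ.
  have [HfE _] := HD f Hf; apply: HC2 => //.
  by apply: pedges_catl; move: Hf; rewrite inE.
have Dis : (C1 :|: D) :\: C1 = D.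
  apply/setP => f; rewrite in_setD in_setU; case Hf: (f \in C1) => //=.
  by case Hd: (f \in D) => //; have [_] := HD f Hd; rewrite Hf.
have HwD : w a u <= wset w D.
  have Hu1 : uniq (a :: Q) by move: HU; rewrite -cat_cons cat_uniq => /andP[].
  rewrite /wset (eq_bigl (fun f => f \in pedges a Q)); last by move=> f; rewrite inE.
  rewrite -big_uniq; last exact: pedges_uniq Hu1.
  by have := sum_path Hm a Q; rewrite HlQ.
have H2 := wset_mono Hm S1.
have H3 := wset_split w (subsetUl C1 D); rewrite Dis in H3.
have H4 := wtri Hm a u v.
rewrite /adv !wset1 !wE2 //.
lra.
Qed.
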